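(* Let $k$ be an algebraically closed field and let $A=kQ/I$ be a gentle algebra. Then the (nonzero) maximal paths in $(Q,I)$ form a $k$-basis of $\mathrm{soc}_{A^e}A$, the socle of $A$ as a module over its enveloping algebra $A^e=A\otimes_k A^{op}$ (i.e. as an $A$-$A$-bimodule).
   Context: $Q$ is a finite connected quiver, $I$ an admissible ideal, paths composed left to right. A path is in $(Q,I)$ if it is not in $I$; it is maximal if for every arrow $\alpha$, $\alpha p\in I$ and $p\alpha\in I$. Gentle means: each vertex is the start of at most two arrows and the end of at most two arrows; for each arrow $\alpha$ at most one arrow $\beta$ with $\alpha\beta\notin I$ and at most one $\gamma$ with $\gamma\alpha\notin I$; $I$ is generated by paths of length 2; for each arrow $\alpha$ at most one arrow $\delta$ with $\alpha\delta\in I$ and at most one $\varepsilon$ with $\varepsilon\alpha\in I$. *)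

(* Defs.v *)
From HB Require Import structures.
From mathcomp Require Import all_boot all_order all_algebra.
Set Implicit Arguments. Unset Strict Implicit. Unset Printing Implicit Defensive.
Import GRing.Theory.
Local Open Scope ring_scope.

(* Paths are composed LEFT TO RIGHT.  A path is encoded as (v, w) where w is the
   word of arrows; (v, [::]) is the trivial path e_v, and for w = a1 :: ... we
   require s a1 = v and t a_i = s a_(i+1). *)
Section Quiver.
Variables (V E : finType) (s t : E -> V).

Definition qpath := (V * seq E)%type.
Definition src (p : qpath) : V := p.1.
Definition tgt (p : qpath) : V := if p.2 is x :: w then t (last x w) else p.1.
Definition valid_path (p : qpath) : bool :=
  if p.2 is x :: w then (s x == p.1) && path (fun a b => t a == s b) x w else true.
Definition arrow_path (a : E) : qpath := (s a, [:: a]).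
Definition path_len (p : qpath) : nat := size p.2.
Definition composable (p q : qpath) : bool := tgt p == src q.
Definition pcat (p q : qpath) : qpath := (p.1, p.2 ++ q.2).

Definition qconnected : Prop :=
  forall u v : V, connect (fun x y => [exists a : E,
     ((s a == x) && (t a == y)) || ((s a == y) && (t a == x))]) u v.

(* The ideal I is generated by the set R of paths of length 2:
   R a b means the length-2 path a b lies in (the generating set of) I. *)
Variable R : rel E.

(* a path lies in I iff it contains a generator as a consecutive subpath *)
Definition in_ideal (p : qpath) : bool :=
  if p.2 is x :: w then ~~ path (fun a b => ~~ R a b) x w else false.
Definition nonzero_path (p : qpath) : bool := valid_path p && ~~ in_ideal p.

(* maximal path: nonzero, and alpha p and p alpha are in I for all arrows alpha
   (a non-composable product is 0, hence in I) *)
Definition is_maximal_path (p : qpath) : bool :=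
  nonzero_path p &&
  [forall a : E,
     ~~ (composable (arrow_path a) p && nonzero_path (pcat (arrow_path a) p)) &&
     ~~ (composable p (arrow_path a) && nonzero_path (pcat p (arrow_path a)))].

(* gentle conditions (I generated by R, R consisting of length-2 paths) *)
Definition gentle : Prop :=
  [/\ (forall a b, R a b -> t a = s b),
      (forall v : V, #|[set a | s a == v]| <= 2 /\ #|[set a | t a == v]| <= 2)%N,
      (forall al : E, #|[set b | (t al == s b) && ~~ R al b]| <= 1 /\
                      #|[set c | (t c == s al) && ~~ R c al]| <= 1)%N &
      (forall al : E, #|[set d | (t al == s d) && R al d]| <= 1 /\
                      #|[set e | (t e == s al) && R e al]| <= 1)%N].

(* admissibility bound: J^m is contained in I (I is contained in J^2 automatically
   since I is generated by paths of length 2) *)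
Definition admissible_bound (m : nat) : Prop :=
  forall p : qpath, valid_path p -> path_len p = m -> in_ideal p.

Fixpoint words (n : nat) : seq (seq E) :=
  if n is n'.+1 then [seq x :: w | x <- enum E, w <- words n'] else [:: [::]].

(* all nonzero paths of length < m; under admissible_bound m these are ALL the
   nonzero paths of (Q, I), i.e. a basis of kQ/I *)
Definition nzpaths (m : nat) : seq qpath :=
  [seq p <- [seq (v, w) | v <- enum V, w <- flatten [seq words n | n <- iota 0 m]]
   | nonzero_path p].

Section Algebra.
Variables (k : fieldType) (m : nat).

Definition PathBasis := seq_sub (nzpaths m).
(* A = kQ/I, as the k-vector space with basis the nonzero paths *)
Definition gentleAlg := {ffun PathBasis -> k^o}.

Definition pathvec (p : qpath) : gentleAlg :=
  if insub p is Some q then [ffun r => if r == q then 1 else 0] else 0.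

Definition mulA (f g : gentleAlg) : gentleAlg :=
  \sum_(p : PathBasis) \sum_(q : PathBasis)
     (f p * g q) *: (if composable (val p) (val q)
                     then pathvec (pcat (val p) (val q)) else 0).

(* sub-A-A-bimodules (= A^e-submodules) of A *)
Definition is_subbimod (U : {vspace gentleAlg}) : Prop :=
  forall a u, u \in U -> mulA a u \in U /\ mulA u a \in U.
Definition simple_subbimod (U : {vspace gentleAlg}) : Prop :=
  [/\ is_subbimod U, U != 0%VS &
      forall W, is_subbimod W -> (W <= U)%VS -> W = 0%VS \/ W = U].
Definition in_socle (x : gentleAlg) : Prop :=
  exists Us : seq {vspace gentleAlg},
    (forall U, U \in Us -> simple_subbimod U) /\ x \in (\sum_(U <- Us) U)%VS.

Definition maxpath_vecs : seq gentleAlg :=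
  [seq pathvec p | p <- nzpaths m & is_maximal_path p].

End Algebra.
End Quiver.

(* Main.v *)
Require Import Defs.
From HB Require Import structures.
From mathcomp Require Import all_boot all_order all_algebra.
From mathcomp Require Import zify.

Module Helpers.
Set Implicit Arguments. Unset Strict Implicit. Unset Printing Implicit Defensive.
Section Comb.
Variables (V E : finType) (s t : E -> V) (R : rel E) (m : nat).
Hypothesis adm : admissible_bound s t R m.

Lemma size_words n w : w \in words E n -> size w = n.
Proof.
elim: n w => [|n IH] w /=; first by rewrite inE => /eqP->.
by case/allpairsP => [[x u] [_ /= /IH <- ->]].
Qed.

Lemma mem_words w : w \in words E (size w).
Proof.
elim: w => [|x w IH] /=; first by rewrite inE.
by apply/allpairsP; exists (x, w); rewrite mem_enum.
Qed.

Lemma uniq_words n : uniq (words E n).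
Proof.
elim: n => [|n IH] //=.
apply: allpairs_uniq => //; first exact: enum_uniq.
by move=> [x u] [y v] _ _ /= [-> ->].
Qed.

Lemma mem_nzpaths p : (p \in nzpaths s t R m) = (nonzero_path s t R p && (path_len p < m)%N).
Proof.
rewrite /nzpaths mem_filter; case: (nonzero_path _ _ _ p) => //=.
apply/allpairsP/idP.
  case=> [[v w] [_ /= /flattenP [ws /mapP [n Hn ->]] /size_words Hs ->]].
  by rewrite /path_len /= Hs; move: Hn; rewrite mem_iota.
move=> lt; exists (p.1, p.2); split => //=; first by rewrite mem_enum.
  apply/flattenP; exists (words E (size p.2)); last exact: mem_words.
  by apply/mapP; exists (size p.2) => //; rewrite mem_iota.
by case: p {lt}.
Qed.

Lemma uniq_nzpaths : uniq (nzpaths s t R m).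
Proof.
apply: filter_uniq; apply: allpairs_uniq; first exact: enum_uniq.
- have -> : flatten [seq words E n | n <- iota 0 m] = [seq w | n <- iota 0 m, w <- words E n].
    by congr flatten; apply: eq_map => n; rewrite map_id.
  apply: allpairs_uniq_dep; first exact: iota_uniq.
  + by move=> n _; exact: uniq_words.
  + move=> [n1 w1] [n2 w2] /allpairsPdep [x1 [y1 [_ /size_words S1 Q1]]].
    move=> /allpairsPdep [x2 [y2 [_ /size_words S2 Q2]]] /= E12.
    have T1 := congr1 tag Q1; have T2 := congr1 tag Q2.
    have U1 := congr1 (@tagged _ (fun=> seq E)) Q1.
    have U2 := congr1 (@tagged _ (fun=> seq E)) Q2.
    simpl in T1, T2, U1, U2.
    by subst.
  + by move=> [x u] [y v] _ _ /= [-> ->].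
Qed.

Lemma nz_len p : nonzero_path s t R p -> (path_len p < m)%N.
Proof.
case: p => v w /andP [vp ip]; rewrite /path_len /=.
rewrite ltnNge; apply/negP => le.
move: adm le; case: m => [|m'] adm' le.
  by have := adm' (v, [::]) isT erefl.
case: w le vp ip => [|x w] //= le vp ip.
move: le; rewrite ltnS leq_eqVlt => /orP [/eqP Em|lt].
  have := adm' (v, x :: w) vp; rewrite /path_len /= -Em => /(_ erefl).
  by rewrite (negbTE ip).
have := adm' (v, x :: take m' w); rewrite /path_len /= size_take lt => H.
have eq: w = take m' w ++ drop m' w by rewrite cat_take_drop.
move: vp ip H; rewrite /valid_path /in_ideal /= {1 2}eq !cat_path => /andP [-> /andP [-> _]].
by rewrite negb_and => /norP [/negbNE -> _] /(_ isT erefl).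
Qed.

Lemma nz_mem p : nonzero_path s t R p -> p \in nzpaths s t R m.
Proof. by move=> nz; rewrite mem_nzpaths nz nz_len. Qed.

Lemma arrow_nz a : nonzero_path s t R (arrow_path s a).
Proof. by rewrite /nonzero_path /valid_path /in_ideal /= eqxx. Qed.

Lemma inj_left a q q' : composable t (arrow_path s a) q -> composable t (arrow_path s a) q' ->
  pcat (arrow_path s a) q = pcat (arrow_path s a) q' -> q = q'.
Proof.
case: q => v w; case: q' => v' w'; rewrite /composable /tgt /src /= => /eqP <- /eqP <-.
by case=> ->.
Qed.

Lemma inj_right a q q' : pcat q (arrow_path s a) = pcat q' (arrow_path s a) -> q = q'.
Proof.
case: q => v w; case: q' => v' w'; rewrite /pcat /= => [[-> E1]].
by move: E1; rewrite !cats1 => /rcons_inj [->].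
Qed.

Lemma maxL p p' : is_maximal_path s t R p -> composable t p' p ->
  nonzero_path s t R (pcat p' p) -> pcat p' p = p.
Proof.
case: p' => v [|x w].
  by case: p => v1 w1; rewrite /composable /tgt /src /pcat /= => _ /eqP ->.
move=> /andP [_ /forallP /(_ (last x w)) /andP [H _]] cp nz.
exfalso; move: H => /negP; apply.
move: cp nz; rewrite /composable /tgt /src /pcat /= => cp.
rewrite /nonzero_path /valid_path /in_ideal /= !negbK !cat_path eqxx cp /=.
by move=> /andP [/andP [_ /andP [_ ->]] /andP [_ ->]].
Qed.

Lemma maxR p q : is_maximal_path s t R p -> composable t p q ->
  nonzero_path s t R (pcat p q) -> pcat p q = p.
Proof.
case: q => v [|x w].
  by case: p => v1 w1; rewrite /pcat /= cats0.
move=> /andP [_ /forallP /(_ x) /andP [_ H]] cp nz.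
exfalso; move: H => /negP; apply.
move: cp nz; case: p => v1 [|y u];
  rewrite /composable /tgt /src /pcat /nonzero_path /valid_path /in_ideal /=.
  by move=> _ /andP [/andP [/eqP -> _] _]; rewrite eqxx.
rewrite !negbK !cat_path /=.
by move=> _ /andP [/andP [-> /andP [-> /andP [-> _]]] /andP [-> /andP [-> _]]].
Qed.

End Comb.

Import GRing.Theory.
Local Open Scope ring_scope.

Section Alg.
Variables (k : fieldType) (V E : finType) (s t : E -> V) (R : rel E) (m : nat).
Hypothesis adm : admissible_bound s t R m.
Local Notation A := (gentleAlg s t R k m).
Local Notation PB := (PathBasis s t R m).
Local Notation pv := (pathvec s t R k m).
Local Notation mul := (@Defs.mulA V E s t R k m).

Lemma pathvecE p (r : PB) : pv p r = (val r == p)%:R.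
Proof.
rewrite /pathvec; case: insubP => [q _ <-|np] /=.
  by rewrite ffunE -val_eqE; case: (_ == _).
case: eqP => [Er|_]; last by rewrite ffunE.
by move: (valP r) np; rewrite /= Er => ->.
Qed.

Lemma scaleAE (c : k) (v : A) (r : PB) : (c *: v) r = c * v r.
Proof. by rewrite /GRing.scale /= ffunE. Qed.

Lemma zeroAE (r : PB) : (0 : A) r = 0.
Proof. by rewrite ffunE. Qed.

Lemma mulAE (f g : A) (r : PB) : mul f g r = \sum_(p : PB) \sum_(q : PB)
  f p * g q * (composable t (val p) (val q) && (val r == pcat (val p) (val q)))%:R.
Proof.
rewrite /Defs.mulA sum_ffunE; apply: eq_bigr => p _; rewrite sum_ffunE; apply: eq_bigr => q _.
rewrite scaleAE; case: composable => /=; last by rewrite zeroAE !mulr0.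
by rewrite pathvecE.
Qed.

Lemma decomp (x : A) : x = \sum_(r : PB) x r *: pv (val r).
Proof.
apply/ffunP => r; rewrite sum_ffunE (bigD1 r) //= big1 => [|r' ne].
  by rewrite scaleAE pathvecE eqxx /= mulr1 addr0.
by rewrite scaleAE pathvecE val_eqE eq_sym (negbTE ne) mulr0.
Qed.

Definition Ln n : {vspace A} :=
  <<[seq pv p | p <- nzpaths s t R m & (n <= path_len p)%N]>>%VS.

Lemma memL n (x : A) :
  (x \in Ln n) <-> (forall r : PB, (path_len (val r) < n)%N -> x r = 0).
Proof.
split.
  move=> /(@coord_span _ _ _ (in_tuple _)) -> r lt.
  rewrite sum_ffunE big1 // => i _; rewrite scaleAE.
  have : (in_tuple [seq pv p | p <- nzpaths s t R m & (n <= path_len p)%N])`_i \in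
        [seq pv p | p <- nzpaths s t R m & (n <= path_len p)%N].
    exact: (mem_nth _ (ltn_ord i)).
  case/mapP => p; rewrite mem_filter => /andP [le _] ->.
  rewrite pathvecE; case: eqP => [E1|_]; last by rewrite mulr0.
  by move: lt; rewrite E1 ltnNge le.
move=> H; rewrite (decomp x); apply: memv_suml => r _.
case: (ltnP (path_len (val r)) n) => [lt|le]; first by rewrite H // scale0r mem0v.
by apply: memvZ; apply: memv_span; apply: map_f; rewrite mem_filter le (valP r).
Qed.

Lemma mul_L i j (f g : A) : f \in Ln i -> g \in Ln j -> mul f g \in Ln (i + j).
Proof.
move=> /memL Hf /memL Hg; apply/memL => r lt.
rewrite mulAE big1 // => p _; rewrite big1 // => q _.
case: (ltnP (path_len (val p)) i) => [lp|lp]; first by rewrite Hf // !mul0r.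
case: (ltnP (path_len (val q)) j) => [lq|lq]; first by rewrite Hg // mulr0 mul0r.
case: eqP => [Er|_]; last by rewrite andbF mulr0.
move: lt; rewrite Er /path_len /= size_cat.
by move: lp lq; rewrite /path_len => lp lq; rewrite ltnNge (leq_add lp lq).
Qed.

Lemma L0 (x : A) : x \in Ln 0.
Proof. by apply/memL. Qed.

Lemma Lm (x : A) : x \in Ln m -> x = 0.
Proof.
move=> /memL H; apply/ffunP => r; rewrite zeroAE; apply: H.
by have := valP r; rewrite mem_nzpaths => /andP [].
Qed.

Lemma natF : (false%:R : k) = 0. Proof. by []. Qed.
Lemma natT : (true%:R : k) = 1. Proof. by []. Qed.

Lemma sum_collapse (F : PB -> k) (r0 : PB) :
  (forall r, r != r0 -> F r = 0) -> \sum_r F r = F r0.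
Proof. by move=> H; rewrite (bigD1 r0) //= big1 ?addr0 // => r /H. Qed.

Lemma memPB p : p \in nzpaths s t R m -> exists r : PB, val r = p.
Proof. by move=> H; exists (SeqSub H). Qed.

Lemma nzPB (r : PB) : nonzero_path s t R (val r).
Proof. by have := valP r; rewrite mem_nzpaths => /andP []. Qed.

Lemma annih (x : A) :
  (forall a : E, mul (pv (arrow_path s a)) x = 0 /\ mul x (pv (arrow_path s a)) = 0) ->
  x \in <<maxpath_vecs s t R k m>>%VS.
Proof.
move=> H; rewrite (decomp x); apply: memv_suml => r _.
case Mx: (is_maximal_path s t R (val r)).
  by apply: memvZ; apply: memv_span; apply: map_f; rewrite mem_filter Mx (valP r).
suff -> : x r = 0 by rewrite scale0r mem0v.
move: Mx; rewrite /is_maximal_path nzPB /= => /negbT /forallPn [a].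
have [pa Epa] := memPB (nz_mem adm (arrow_nz s t R a)).
rewrite negb_and !negbK => /orP [/andP [cp nz] | /andP [cp nz]];
  have [r' Er'] := memPB (nz_mem adm nz).
- have := congr1 (fun f : A => f r') (H a).1; rewrite mulAE zeroAE.
  rewrite (sum_collapse (r0:=pa)) => [|p ne]; last first.
    by rewrite big1 // => q _; rewrite pathvecE -Epa val_eqE (negbTE ne) natF !mul0r.
  rewrite (sum_collapse (r0:=r)) => [|q ne]; last first.
    rewrite Er' Epa; case: (boolP (composable _ _ _)) => cq /=; last by rewrite mulr0.
    case: eqP => [/(inj_left cp cq) /val_inj E1|_]; last by rewrite mulr0.
    by rewrite E1 eqxx in ne.
  by rewrite pathvecE Epa eqxx Er' cp eqxx /= mul1r mulr1.
- have := congr1 (fun f : A => f r') (H a).2; rewrite mulAE zeroAE.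
  rewrite (sum_collapse (r0:=r)) => [|p ne]; last first.
    rewrite (sum_collapse (r0:=pa)) => [|q neq]; last first.
      by rewrite pathvecE -Epa val_eqE (negbTE neq) natF mulr0 mul0r.
    rewrite Er' Epa; case: eqP => [/inj_right /val_inj E1|_]; last by rewrite andbF mulr0.
    by rewrite E1 eqxx in ne.
  rewrite (sum_collapse (r0:=pa)) => [|q neq]; last first.
    by rewrite pathvecE -Epa val_eqE (negbTE neq) natF mulr0 mul0r.
  by rewrite pathvecE Epa eqxx Er' cp eqxx /= !mulr1.
Qed.

Lemma step (P : nat -> bool) n : P 0%N -> ~~ P n -> exists j, P j && ~~ P j.+1.
Proof.
elim: n => [|n IH] P0 Pn; first by rewrite P0 in Pn.
by case: (boolP (P n)) => Hn; [exists n; rewrite Hn | exact: IH].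
Qed.

Lemma arrow_L a : pv (arrow_path s a) \in Ln 1.
Proof.
apply/memL => r lt; rewrite pathvecE; case: eqP => [E1|_]; last by rewrite natF.
by move: lt; rewrite E1.
Qed.

Lemma simple_sub U : simple_subbimod U -> (U <= <<maxpath_vecs s t R k m>>)%VS.
Proof.
case=> sub nz smp.
have [n /andP [Un Un1]] : exists n, (U <= Ln n)%VS && ~~ (U <= Ln n.+1)%VS.
  apply: (@step (fun n => (U <= Ln n)%VS) m).
  - by apply/subvP => u _; exact: L0.
  - apply/negP => /subvP H; move/negP: nz; apply; rewrite -subv0.
    by apply/subvP => u /H /Lm ->; rewrite mem0v.
set W := (U :&: Ln n.+1)%VS.
have subW : is_subbimod W.
  move=> a u; rewrite memv_cap => /andP [uU uL]; have [h1 h2] := sub a u uU.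
  rewrite !memv_cap h1 h2 /=; split.
  - by have := mul_L (L0 a) uL; rewrite add0n.
  - by have := mul_L uL (L0 a); rewrite addn0.
have [W0|WU] := smp W subW (capvSl _ _); last first.
  by move: (capvSr U (Ln n.+1)); rewrite -/W WU (negbTE Un1).
apply/subvP => u uU; apply: annih => a; split; apply/eqP; rewrite -memv0 -W0 memv_cap.
  rewrite (sub _ _ uU).1 /=; have := mul_L (arrow_L a) ((subvP Un) u uU).
  by rewrite add1n.
rewrite (sub _ _ uU).2 /=; have := mul_L ((subvP Un) u uU) (arrow_L a).
by rewrite addn1.
Qed.

Lemma line_mem (y : A) (pr : PB) : (forall r, r != pr -> y r = 0) -> y \in <[pv (val pr)]>%VS.
Proof.
move=> H; suff -> : y = y pr *: pv (val pr) by apply: memvZ; apply: memv_line.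
apply/ffunP => r; rewrite scaleAE pathvecE val_eqE.
by case: (eqVneq r pr) => [->|ne]; [rewrite natT mulr1 | rewrite ?(negbTE ne) natF mulr0 H].
Qed.

Lemma line_supp (u : A) (pr : PB) r : u \in <[pv (val pr)]>%VS -> r != pr -> u r = 0.
Proof.
by move=> /vlineP [c ->] ne; rewrite scaleAE pathvecE val_eqE (negbTE ne) natF mulr0.
Qed.

Lemma pv_nz (pr : PB) : pv (val pr) != 0.
Proof.
apply/eqP => /(congr1 (fun f : A => f pr)); rewrite pathvecE eqxx zeroAE natT.
by move/eqP; rewrite oner_eq0.
Qed.

Lemma line_simple (pr : PB) : is_maximal_path s t R (val pr) ->
  simple_subbimod <[pv (val pr)]>%VS.
Proof.
move=> Mp; split.
- move=> a u uL; split; apply: line_mem => r ne; rewrite mulAE big1 // => p _;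
    rewrite big1 // => q _.
  + case: (eqVneq q pr) => [->|nq]; last by rewrite (line_supp uL nq) mulr0 mul0r.
    case: (boolP (composable _ _ _)) => cq /=; last by rewrite mulr0.
    case: eqP => [Er|_]; last by rewrite mulr0.
    have nzc : nonzero_path s t R (pcat (val p) (val pr)) by rewrite -Er nzPB.
    have := maxL Mp cq nzc; rewrite -Er => /val_inj Erp.
    by rewrite Erp eqxx in ne.
  + case: (eqVneq p pr) => [->|np]; last by rewrite (line_supp uL np) !mul0r.
    case: (boolP (composable _ _ _)) => cq /=; last by rewrite mulr0.
    case: eqP => [Er|_]; last by rewrite mulr0.
    have nzc : nonzero_path s t R (pcat (val pr) (val q)) by rewrite -Er nzPB.
    have := maxR Mp cq nzc; rewrite -Er => /val_inj Erp.
    by rewrite Erp eqxx in ne.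
- by rewrite -dimv_eq0 dim_vline pv_nz.
- move=> W _ sWL; have := dimvS sWL; rewrite dim_vline pv_nz.
  case: (eqVneq (\dim W) 0%N) => [/eqP|d _].
    by rewrite dimv_eq0 => /eqP ->; left.
  right; apply/eqP; rewrite eqEdim sWL dim_vline pv_nz /=.
  by rewrite lt0n.
Qed.

Lemma free_pv (P : seq (qpath V E)) : uniq P -> {subset P <= nzpaths s t R m} ->
  free [seq pv p | p <- P].
Proof.
elim: P => [|p P IH] /=; first by rewrite nil_free.
move=> /andP [pP uP] sub.
rewrite free_cons IH ?andbT //; last by move=> q qP; apply: sub; rewrite inE qP orbT.
have [pr Epr] := memPB (sub p (mem_head _ _)).
apply/negP => /(@coord_span _ _ _ (in_tuple _)) /(congr1 (fun f : A => f pr)).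
rewrite pathvecE Epr eqxx natT sum_ffunE big1 => [|i _].
  by move/eqP; rewrite oner_eq0.
rewrite scaleAE.
have : (in_tuple [seq pv p | p <- P])`_i \in [seq pv p | p <- P].
  exact: (mem_nth _ (ltn_ord i)).
case/mapP => q qP ->; rewrite pathvecE Epr; case: eqP => [E1|_]; last by rewrite natF mulr0.
by move: pP; rewrite E1 qP.
Qed.

End Alg.


End Helpers.
Import Helpers.
Unset Implicit Arguments.

Theorem lemma2p1 (k : closedFieldType) (V E : finType) (s t : E -> V)
  (R : rel E) (m : nat) :
  qconnected s t -> gentle s t R -> admissible_bound s t R m ->
  free (maxpath_vecs s t R k m) /\
  (forall x : gentleAlg s t R k m,
     x \in <<maxpath_vecs s t R k m>>%VS <-> in_socle x).
Proof.
move=> _ _ adm; split.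
  rewrite /maxpath_vecs; apply: free_pv; first exact: filter_uniq (uniq_nzpaths _ _ _ _).
  by move=> p; rewrite mem_filter => /andP [].
move=> x; split.
  move=> xS; exists [seq <[v]>%VS | v <- maxpath_vecs s t R k m]; split.
    move=> U /mapP [v /mapP [p]]; rewrite mem_filter => /andP [Mp pin] -> ->.
    have [pr Epr] := memPB pin; rewrite -Epr; apply: line_simple => //; by rewrite Epr.
  by rewrite big_map -span_def.
case=> Us [HU]; apply/subvP.
elim: Us HU => [|U Us IH] HU; first by rewrite big_nil sub0v.
rewrite big_cons subv_add simple_sub ?IH //.
  by move=> U' U'in; apply: HU; rewrite inE U'in orbT.
by apply: HU; rewrite mem_head.
Qed.
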